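(* Let $N\geq 2$ and let $\Sigma$ be the one-sided shift on $\{0,1,\dots,N-1\}^{\mathbb{N}_0}$, ordered lexicographically. Then for every $L\geq N+2$, $\Sigma$ has forbidden root patterns of length $L$.
   Context: $\{0,1,\dots,N-1\}^{\mathbb{N}_0}$ is the set of sequences $\omega=(\omega_0,\omega_1,\dots)$ with $\omega_n\in\{0,\dots,N-1\}$, and $\Sigma(\omega_0,\omega_1,\dots)=(\omega_1,\omega_2,\dots)$; $\omega<\omega'$ lexicographically iff at the first index $n$ where they differ, $\omega_n<\omega'_n$. $\mathcal{S}_L$ is the set of permutations $\pi=[\pi_0,\dots,\pi_{L-1}]$ of $\{0,\dots,L-1\}$. $\omega$ defines $\pi$ if $\Sigma^{\pi_0}(\omega)<\dots<\Sigma^{\pi_{L-1}}(\omega)$; $\pi$ is forbidden if no $\omega$ defines it. For $\pi\in\mathcal{S}_L$ and $M>L$, a pattern $\sigma=[\sigma_0,\dots,\sigma_{M-1}]\in\mathcal{S}_M$ is an outgrowth pattern of $\pi$ if there exist $n\in\{0,1,\dots,M-L\}$ and indices $i_0<i_1<\dots<i_{L-1}$ with $\sigma_{i_k}=\pi_k+n$ for $k=0,\dots,L-1$ (equivalently, $\sigma^{-1}$ contains $\pi^{-1}$ as a consecutive pattern). A forbidden root pattern is a forbidden pattern that is not an outgrowth pattern of any forbidden pattern of shorter length. *)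

(* Defs.v *)
From mathcomp Require Import all_boot all_fingroup.
Set Implicit Arguments. Unset Strict Implicit. Unset Printing Implicit Defensive.

Definition word (N : nat) := nat -> 'I_N.

Definition shiftk (N : nat) (k : nat) (w : word N) : word N := fun n => w (n + k).

Definition lexlt (N : nat) (w w' : word N) : Prop :=
  exists n, (forall k, k < n -> w k = w' k) /\ (w n < w' n)%N.

Definition defines (N L : nat) (w : word N) (pi : {perm 'I_L}) : Prop :=
  forall i j : 'I_L, j = i.+1 :> nat ->
    lexlt (shiftk (pi i) w) (shiftk (pi j) w).

Definition forbidden (N L : nat) (pi : {perm 'I_L}) : Prop :=
  ~ (exists w : word N, defines w pi).

Definition outgrowth (L M : nat) (pi : {perm 'I_L}) (sigma : {perm 'I_M}) : Prop :=
  (L < M)%N /\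
  exists (n : nat) (idx : 'I_L -> 'I_M),
    (n <= M - L)%N /\
    (forall k k' : 'I_L, (k < k')%N -> (idx k < idx k')%N) /\
    (forall k : 'I_L, val (sigma (idx k)) = val (pi k) + n).

Definition forbidden_root (N L : nat) (pi : {perm 'I_L}) : Prop :=
  forbidden N pi /\
  forall (L' : nat) (pi' : {perm 'I_L'}), (L' < L)%N ->
    forbidden N pi' -> ~ outgrowth pi' pi.

(* Main.v *)
Require Import Defs.
From mathcomp Require Import all_boot all_fingroup.
From mathcomp Require Import zify.
Set Implicit Arguments. Unset Strict Implicit. Unset Printing Implicit Defensive.

Definition ef (N j : nat) : nat := if j*2 + 2 <= N then N - 2 - j*2 else j*2 + 1 - N.
Definition rf (N k : nat) : nat :=
  if (N + k) %% 2 == 0 then (N - 2 - k) %/ 2 else (k + N - 1) %/ 2.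
Definition pif (N L i : nat) : nat :=
  if i < L - 1 - N then N + i else if i < L - 1 then ef N (i - (L - 1 - N)) else L - 1.
Definition fA (N L k : nat) : nat := if k < N then rf N k else if k < L then 0 else 1.
Definition fB (N L k : nat) : nat :=
  if k < N then (if rf N k < rf N 0 then rf N k + 1 else rf N k)
  else if k < L - 1 then 0 else N - 1.
Definition sp (N L k : nat) : nat :=
  if k*2 + 2 <= N then L - 2 - k else if k.+1 < N then L - 3 - k else 0.

Ltac dif := repeat match goal with
  | |- context [if ?b then _ else _] => case: (boolP b) => ? end.
Ltac difH H := repeat match type of H with
  | context [if ?b then _ else _] => case: (boolP b) H => ? H end.

Lemma ef_lt N j : j < N -> ef N j < N.
Proof. rewrite /ef; dif; lia. Qed.

Lemma rf_ef N j : j < N -> rf N (ef N j) = j.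
Proof. rewrite /ef => H; dif; rewrite /rf; dif; lia. Qed.

Lemma rf_lt N k : k < N -> rf N k < N.
Proof. rewrite /rf; dif; lia. Qed.

Lemma ef_inj N j j' : j < N -> j' < N -> ef N j = ef N j' -> j = j'.
Proof. move=> H1 H2 E. by rewrite -(rf_ef H1) -(rf_ef H2) E. Qed.

Lemma pif_lt N L i : N + 2 <= L -> i < L -> pif N L i < L.
Proof.
move=> HL Hi; rewrite /pif; dif; try lia.
have := @ef_lt N (i - (L - 1 - N)); lia.
Qed.

Lemma pif_inj N L i i' : N + 2 <= L -> i < L -> i' < L -> pif N L i = pif N L i' -> i = i'.
Proof.
move=> HL Hi Hi'; rewrite /pif; dif; try lia;
 try (move=> E; have := @ef_inj N (i - (L - 1 - N)) (i' - (L - 1 - N)); lia);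
 try (have := @ef_lt N (i - (L - 1 - N)); lia);
 try (have := @ef_lt N (i' - (L - 1 - N)); lia).
Qed.

Lemma ef_rf N k : k < N -> ef N (rf N k) = k.
Proof. rewrite /rf => H; dif; rewrite /ef; dif; lia. Qed.

Lemma pif_pad N L i : i < L - 1 - N -> pif N L i = N + i.
Proof. by rewrite /pif => ->. Qed.
Lemma pif_in N L i : L - 1 - N <= i -> i < L - 1 -> pif N L i = ef N (i - (L - 1 - N)).
Proof. rewrite /pif => H1 H2; dif; lia. Qed.
Lemma pif_top N L : N + 2 <= L -> pif N L (L - 1) = L - 1.
Proof. rewrite /pif => H; dif; lia. Qed.
Lemma ef0 N : 2 <= N -> ef N 0 = N - 2.
Proof. rewrite /ef; dif; lia. Qed.
Lemma efN N : 2 <= N -> ef N (N - 1) = N - 1.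
Proof. rewrite /ef; dif; lia. Qed.
Lemma rf0 N : 2 <= N -> rf N 0 < N - 1.
Proof. rewrite /rf; dif; lia. Qed.

Lemma fA_ef N L j : j < N -> fA N L (ef N j) = j.
Proof. move=> H; rewrite /fA ef_lt // rf_ef //. Qed.
Lemma fB_ef N L j : j < N ->
  fB N L (ef N j) = if j < rf N 0 then j + 1 else j.
Proof. move=> H; rewrite /fB ef_lt // rf_ef //. Qed.

Lemma sp_lt N L k : N + 2 <= L -> k < N -> sp N L k < L - 1.
Proof. rewrite /sp; dif; lia. Qed.
Lemma sp_mono N L k : N + 2 <= L -> k.+1 < N -> sp N L k.+1 < sp N L k.
Proof. rewrite /sp; dif; lia. Qed.
Lemma pif_sp N L k : N + 2 <= L -> k < N -> pif N L (sp N L k) = ef N k + 1.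
Proof.
move=> HL Hk; rewrite /sp; dif.
- rewrite pif_in; try lia. rewrite /ef; dif; lia.
- rewrite pif_in; try lia. rewrite /ef; dif; lia.
- rewrite pif_pad; try lia. rewrite /ef; dif; lia.
Qed.

Definition realizes (f : nat -> nat) (a b : nat) :=
  exists m, (forall m', m' < m -> f (m' + a) = f (m' + b)) /\ f (m + a) < f (m + b).

Lemma realA N L i i' : 2 <= N -> N + 2 <= L -> i < i' -> i' < L - 1 ->
  realizes (fA N L) (pif N L i) (pif N L i').
Proof.
move=> HN HL Hii' Hi'.
have [Hp|Hp] := ltnP i (L - 1 - N); have [Hp'|Hp'] := ltnP i' (L - 1 - N).
- rewrite !pif_pad //. exists (L - N - i'); split.
    by move=> m' Hm; rewrite /fA; dif; lia.
  rewrite /fA; dif; lia.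
- rewrite pif_pad // pif_in //.
  set j := i' - _.
  have Hj : j < N by lia.
  case: (posnP j) => Hj0.
  + exists 1; split.
      move=> m'; rewrite ltnS leqn0 => /eqP ->.
      rewrite Hj0 ef0 // /fA; dif; try lia. rewrite /rf; dif; lia.
    rewrite Hj0 ef0 //.
    have -> : 1 + (N - 2) = ef N (N - 1) by rewrite efN; lia.
    rewrite fA_ef; try lia. rewrite /fA; dif; lia.
  + exists 0; split => //. rewrite !add0n fA_ef //. rewrite /fA; dif; lia.
- lia.
- rewrite !pif_in //; try lia. exists 0; split => //.
  rewrite !add0n !fA_ef; lia.
Qed.

Lemma fB_ef_pos N L j : 2 <= N -> j < N -> 0 < ef N j -> 0 < fB N L (ef N j).
Proof.
move=> HN Hj Hp; rewrite fB_ef //; dif; try lia.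
have : j <> rf N 0 by move=> E; move: Hp; rewrite E ef_rf //; lia.
lia.
Qed.

Lemma realB N L i i' : 2 <= N -> N + 2 <= L -> i < i' -> i' < L ->
  0 < pif N L i -> 0 < pif N L i' ->
  realizes (fB N L) (pif N L i) (pif N L i').
Proof.
move=> HN HL Hii' Hi' P1 P2.
have R0 := rf0 HN.
have [Hp|Hp] := ltnP i (L - 1 - N); have [Hp'|Hp'] := ltnP i' (L - 1 - N).
- rewrite !pif_pad //. exists (L - 1 - N - i'); split.
    by move=> m' Hm; rewrite /fB; dif; lia.
  rewrite /fB; dif; lia.
- have [Ht|Ht] := ltnP i' (L - 1).
  + move: P2; rewrite (pif_pad Hp) (pif_in Hp' Ht) => P2.
    exists 0; split => //. rewrite !add0n.
    have := @fB_ef_pos N L (i' - (L - 1 - N)) HN ltac:(lia) P2.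
    rewrite /fB; dif; lia.
  + have -> : i' = L - 1 by lia.
    rewrite (pif_pad Hp) pif_top //. exists 0; split => //.
    rewrite /fB; dif; lia.
- lia.
- have [Ht|Ht] := ltnP i' (L - 1).
  + move: P1 P2; rewrite (pif_in Hp) ?(pif_in Hp' Ht); try lia => P1 P2.
    exists 0; split => //.
    have : i - (L - 1 - N) <> rf N 0 by move=> E; move: P1; rewrite E ef_rf //; lia.
    have : i' - (L - 1 - N) <> rf N 0 by move=> E; move: P2; rewrite E ef_rf //; lia.
    rewrite !add0n !fB_ef; try lia. dif; lia.
  + have -> : i' = L - 1 by lia.
    rewrite (pif_in Hp); try lia. rewrite pif_top //.
    set j := i - _.
    have Hj : j < N by lia.
    have [Ej|Ej] := eqVneq j (N - 1).
    * exists 1; split.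
        move=> m'; rewrite ltnS leqn0 => /eqP ->.
        rewrite !add0n Ej fB_ef; try lia. rewrite /fB; dif; lia.
      rewrite Ej efN //. rewrite /fB; dif; lia.
    * exists 0; split => //. rewrite !add0n fB_ef //.
      rewrite /fB; dif; lia.
Qed.

Lemma lex_asym N (u v : word N) : lexlt u v -> lexlt v u -> False.
Proof.
move=> [n [Hn Hl]] [n' [Hn' Hl']].
have [lt|gt|eq] := ltngtP n n'.
- have := Hn' _ lt; move=> E; move: Hl; rewrite E; lia.
- have := Hn _ gt; move=> E; move: Hl'; rewrite E; lia.
- subst; lia.
Qed.

Lemma lex_trans N (u v x : word N) : lexlt u v -> lexlt v x -> lexlt u x.
Proof.
move=> [n [Hn Hl]] [n' [Hn' Hl']].
have [lt|gt|eq] := ltngtP n n'.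
- exists n; split; first by move=> k Hk; rewrite (Hn k) ?(Hn' k) //; lia.
  by rewrite -(Hn' _ lt).
- exists n'; split; first by move=> k Hk; rewrite (Hn k) ?(Hn' k) //; lia.
  by rewrite (Hn _ gt).
- subst; exists n'; split; first by move=> k Hk; rewrite (Hn k) ?(Hn' k) //; lia.
  exact: ltn_trans Hl Hl'.
Qed.

Lemma lex_ext N (u v u' v' : word N) : (forall k, u k = u' k) -> (forall k, v k = v' k) ->
  lexlt u v -> lexlt u' v'.
Proof.
move=> Eu Ev [n [Hn Hl]]; exists n; split; last by rewrite -Eu -Ev.
by move=> k Hk; rewrite -Eu -Ev (Hn k Hk).
Qed.

Lemma forced N (w : word N) a b :
  lexlt (shiftk a w) (shiftk b w) -> lexlt (shiftk (b + 1) w) (shiftk (a + 1) w) ->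
  (w a < w b)%N.
Proof.
move=> [n [Hn Hl]] H2.
case: n Hn Hl => [|n] Hn Hl; first by move: Hl; rewrite /shiftk !add0n.
exfalso; apply: (lex_asym _ H2).
exists n; split.
  by move=> k Hk; rewrite /shiftk !addnA !addn1; apply: (Hn k.+1).
by move: Hl; rewrite /shiftk !addnA !addn1.
Qed.

Definition mkw N (HN : 0 < N) (f : nat -> nat) : word N :=
  fun k => Ordinal (ltn_pmod (f k) HN).

Lemma real_lex N (HN : 0 < N) f a b : (forall k, f k < N) -> realizes f a b ->
  lexlt (shiftk a (mkw HN f)) (shiftk b (mkw HN f)).
Proof.
move=> Hf [m [Hm Hl]]; exists m; split.
  by move=> k Hk; apply: val_inj; rewrite /= Hm.
by rewrite /= !modn_small.
Qed.

Section Main.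
Variables (N L : nat) (hN : 2 <= N) (hL : N + 2 <= L) (pi : {perm 'I_L})
  (Epi : forall i : 'I_L, val (pi i) = pif N L i).

Lemma forb : forbidden N pi.
Proof.
move=> [w Hw].
have Hs : forall i, i.+1 < L -> lexlt (shiftk (pif N L i) w) (shiftk (pif N L i.+1) w).
  move=> i Hi.
  have := Hw (Ordinal (ltnW Hi)) (Ordinal Hi) erefl.
  by rewrite !Epi.
have Hg : forall d i, i + d.+1 < L ->
    lexlt (shiftk (pif N L i) w) (shiftk (pif N L (i + d.+1)) w).
  elim=> [|d IH] i Hi; first by rewrite addn1; apply: Hs; rewrite -addn1.
  apply: lex_trans (IH i _) _; first lia.
  have -> : i + d.+2 = (i + d.+1).+1 by lia.
  apply: Hs; lia.
have Hlt : forall i i', i < i' -> i' < L ->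
    lexlt (shiftk (pif N L i) w) (shiftk (pif N L i') w).
  move=> i i' H1 H2; have -> : i' = i + (i' - i - 1).+1 by lia.
  apply: Hg; lia.
pose P j := L - 2 - N + j.
pose q j := if j == 0 then L - 1 else sp N L (j - 1).
have Pq : forall j, j <= N -> pif N L (P j) + 1 = pif N L (q j).
  move=> j Hj; rewrite /P /q; case: eqP => [->|Hj0].
    rewrite pif_pad ?pif_top //; lia.
  rewrite pif_sp; try lia. rewrite pif_in; try lia. congr (ef _ _ + 1); lia.
have qlt : forall j, j < N -> q j.+1 < q j.
  move=> j Hj; rewrite /q /= subn1 /=.
  case: (posnP j) => [->|Hj0] /=.
    have := @sp_lt N L 0 hL; lia.
  have -> : j = (j - 1).+1 by lia.
  rewrite /= !subn1 /=.
  apply: (sp_mono hL); lia.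
have qL : forall j, j <= N -> q j < L.
  move=> j Hj; rewrite /q; case: eqP => _; first lia.
  have := @sp_lt N L (j - 1) hL; lia.
have key : forall j, j <= N -> j <= w (pif N L (P j)).
  elim=> [|j IH] Hj //.
  have := IH (ltnW Hj).
  have : (w (pif N L (P j)) < w (pif N L (P j.+1)))%N.
    apply: forced.
      apply: Hlt; rewrite /P; lia.
    rewrite Pq ?Pq; try lia.
    apply: Hlt; [apply: qlt; lia | apply: qL; lia].
  lia.
have := key N (leqnn N).
have := ltn_ord (w (pif N L (P N))).
lia.
Qed.

Lemma noroot (L' : nat) (pi' : {perm 'I_L'}) : (L' < L)%N -> forbidden N pi' -> ~ outgrowth pi' pi.
Proof.
move=> HL' Hf [_ [n [idx [Hn [Hmono Hval]]]]].
apply: Hf.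
have HN0 : 0 < N by lia.
have Hpos : forall k : 'I_L', pif N L (idx k) = pi' k + n by move=> k; rewrite -Epi Hval.
have Hpf : forall p : 'I_L, pif N L p < L by move=> p; apply: pif_lt.
case: (posnP n) => Hn0.
- exists (mkw HN0 (fA N L)) => i j Hij.
  have Hi := Hpos i; have Hj := Hpos j.
  have Hidx : (idx i < idx j)%N by apply: Hmono; rewrite Hij.
  have Hj' : (idx j < L - 1)%N.
    have := ltn_ord (idx j); have := ltn_ord j.
    case: (ltngtP (idx j) (L - 1)) => // E.
    + lia.
    + move: Hj; rewrite E pif_top //; have := ltn_ord (pi' j); lia.
  have := real_lex HN0 _ (realA hN hL Hidx Hj').
  rewrite Hi Hj Hn0 !addn0; apply.
  move=> k; rewrite /fA; dif; try lia; have := @rf_lt N k; lia.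
- exists (shiftk n (mkw HN0 (fB N L))) => i j Hij.
  have Hi := Hpos i; have Hj := Hpos j.
  have Hidx : (idx i < idx j)%N by apply: Hmono; rewrite Hij.
  have := real_lex HN0 _ (realB hN hL Hidx (ltn_ord _) ltac:(lia) ltac:(lia)).
  rewrite Hi Hj.
  move=> H; apply: lex_ext (H _).
  + by move=> k; rewrite /shiftk addnA.
  + by move=> k; rewrite /shiftk addnA.
  move=> k; have := rf0 hN; rewrite /fB; dif; try lia; have := @rf_lt N k; lia.
Qed.

End Main.

Theorem proposition5 (N : nat) (hN : (2 <= N)%N) (L : nat) (hL : (N + 2 <= L)%N) :
  exists pi : {perm 'I_L}, forbidden_root N pi.
Proof.
have HL0 : 0 < L by lia.
have inj : injective (fun i : 'I_L => Ordinal (ltn_pmod (pif N L i) HL0)).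
  move=> i j /(congr1 val) /=; rewrite !modn_small; try exact: pif_lt.
  move=> E; apply: val_inj; exact: pif_inj hL (ltn_ord i) (ltn_ord j) E.
exists (perm inj).
have Epi : forall i : 'I_L, val (perm inj i) = pif N L i.
  by move=> i; rewrite permE /= modn_small // pif_lt.
split; first exact: (@forb N L hN hL _ Epi).
move=> L' pi'; exact: (@noroot N L hN hL _ Epi L' pi').
Qed.
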